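(* For $\epsilon\in(0,1)$ and every $x\in\{0,1\}^n$ with Hamming weight $|x|\in[n/2,\,n/2+0.05\,\epsilon\sqrt n]$, if $\mathbf T\sim\mathsf{Talagrand}(n,\epsilon)$ then $\Pr_{\mathbf T}\big[|S_{\mathbf T}(x)|=1\big]>0.03$.
   Context: $\mathsf{Talagrand}(n,\epsilon)$ is the following distribution: let $L=0.1\cdot 2^{\sqrt n/\epsilon}$; independently for each $i=1,\dots,L$, draw a set $\mathbf T_i\subseteq[n]$ by choosing $\sqrt n/\epsilon$ elements of $[n]$ independently and uniformly with replacement (quantities are assumed/rounded to be integers). For $T=(T_1,\dots,T_L)$ and $x\in\{0,1\}^n$, $T_\ell(x)=1$ iff $x_j=1$ for all $j\in T_\ell$, and $S_T(x)=\{\ell\in[L]:T_\ell(x)=1\}$. $|x|$ denotes the number of ones in $x$. *)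

(* Defs.v *)
From HB Require Import structures.
From mathcomp Require Import all_boot all_order all_algebra.
From mathcomp Require Import reals.
Set Implicit Arguments. Unset Strict Implicit. Unset Printing Implicit Defensive.
Import Order.TTheory GRing.Theory Num.Theory.
Local Open Scope ring_scope.

Definition talK (R : realType) (n : nat) (eps : R) : nat :=
  `|Num.ceil (Num.sqrt (n%:R) / eps)|%N.

Definition talL (R : realType) (k : nat) : nat :=
  `|Num.ceil ((10%:R : R)^-1 * 2%:R ^+ k)|%N.

(* A sample T = (T_1,...,T_L); T_l is given by the k indices drawn
   independently and uniformly with replacement from [n] = 'I_n.  The
   set T_l is the set of drawn indices. *)
Definition talSample (L k n : nat) := {ffun 'I_L -> {ffun 'I_k -> 'I_n}}.

Definition talT (L k n : nat) (T : talSample L k n) (l : 'I_L)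
  (x : {ffun 'I_n -> bool}) : bool :=
  [forall j : 'I_k, x (T l j)].

Definition talS (L k n : nat) (T : talSample L k n) (x : {ffun 'I_n -> bool})
  : {set 'I_L} :=
  [set l | talT T l x].

Definition hweight (n : nat) (x : {ffun 'I_n -> bool}) : nat := #|[set i | x i]|.

(* Pr_{T ~ Talagrand(n,eps)} [ |S_T(x)| = 1 ] : the sample space is uniform
   over all (L*k)-tuples of indices in [n]. *)
Definition talProbS1 (R : realType) (n : nat) (eps : R) (x : {ffun 'I_n -> bool}) : R :=
  let k := talK n eps in
  let L := talL R k in
  (#|[set T : talSample L k n | #|talS T x| == 1%N]|%:R)
    / (#|[set: talSample L k n]|%:R).

(* Main.v *)
Require Import Defs.
From HB Require Import structures.
From mathcomp Require Import all_boot all_order all_algebra.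
From mathcomp Require Import reals.
From mathcomp Require Import ring lra.
Import Order.TTheory GRing.Theory Num.Theory.
Section Comb.
Variables (L k n : nat) (x : {ffun 'I_n -> bool}).
Definition G : {set {ffun 'I_k -> 'I_n}} := [set f : {ffun 'I_k -> 'I_n} | [forall j, x (f j)]].
Definition Fam (l : 'I_L) := fun l' : 'I_L => [pred f : {ffun 'I_k -> 'I_n} | (f \in G) == (l' == l)].

Lemma famE (T : talSample L k n) l : (T \in family (Fam l)) = (talS T x == [set l]).
Proof.
apply/forallP/eqP => [H|H].
  apply/setP => l'; rewrite !inE /talT -(eqP (H l')) /= inE //.
move=> l'; by rewrite /= inE -[l' == l]in_set1 -H inE /talT inE /talT eqxx.
Qed.

Lemma sumS1 (S : {set 'I_L}) : (\sum_l (S == [set l]) = (#|S| == 1%N))%N.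
Proof.
case: (@cards1P _ S) => [[l0 ->]|H].
  rewrite (bigD1 l0) //= eqxx big1 // => l /negbTE Hl.
  by rewrite eq_sym eqEcard sub1set in_set1 Hl.
rewrite big1 // => l; case: eqP => // E; case: H; by exists l.
Qed.

Lemma cardFam l : #|family (Fam l)| = (#|G| * #|~: G| ^ L.-1)%N.
Proof.
rewrite card_family foldrE big_map big_enum /= (bigD1 l) //=.
rewrite (eq_bigr (fun _ => #|~: G|)); last first.
  move=> l' /negbTE Hl; apply: eq_card => f; rewrite !inE Hl unfold_in /= inE; by case: [forall j, _].
rewrite (eq_bigl (predC1 l)) // prod_nat_const cardC1 card_ord; congr (_ * _)%N.
apply: eq_card => f; rewrite -topredE /= eqxx; by case: (f \in G).
Qed.

Lemma countS1 : #|[set T : talSample L k n | #|talS T x| == 1%N]| = (L * (#|G| * #|~: G| ^ L.-1))%N.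
Proof.
rewrite -sum1_card big_mkcond /=.
rewrite (eq_bigr (fun T => \sum_l (T \in family (Fam l)) : nat)%N); last first.
  move=> T _; rewrite inE (eq_bigr (fun l => (talS T x == [set l]) : nat)); last by move=> l _; rewrite famE.
  by rewrite sumS1; case: (_ == 1%N).
rewrite exchange_big /= (eq_bigr (fun _ => (#|G| * #|~: G| ^ L.-1)%N)).
  by rewrite sum_nat_const card_ord.
move=> l _; rewrite -(cardFam l) -sum1_card [RHS]big_mkcond /=; apply: eq_bigr => T _; by case: (T \in _).
Qed.

Lemma cardG : #|G| = (#|[set i | x i]| ^ k)%N.
Proof.
rewrite -[in RHS](card_ord k) -card_ffun_on; apply: eq_card => f.
rewrite inE; apply/forallP/forallP => H j; move: (H j); by rewrite ?inE.
Qed.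
End Comb.
Local Open Scope ring_scope.
Section Real.
Variable R : realType.

Lemma bern (m : nat) (q : R) : 0 <= q -> q <= 1 -> 1 - m%:R * q <= (1 - q) ^+ m.
Proof.
move=> q0 q1; elim: m => [|m IH]; first by rewrite mul0r subr0 expr0.
rewrite exprS; have h1 : 0 <= 1 - q by lra.
have := ler_wpM2l h1 IH; have : 0 <= m%:R * q * q :> R by rewrite !mulr_ge0.
rewrite -addn1 natrD; nra.
Qed.

Lemma final (q : R) (L : nat) : 0 <= q -> q <= 1 ->
  1 / 10 <= L%:R * q -> L%:R * q <= 7 / 16 ->
  3%:R / 100%:R < L%:R * q * (1 - q) ^+ L.-1.
Proof.
move=> q0 q1 h1 h2.
have hb := @bern L.-1 q q0 q1.
have hL : (L.-1)%:R <= L%:R :> R by rewrite ler_nat leq_pred.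
have : (L.-1)%:R * q <= L%:R * q by rewrite ler_wpM2r.
set v := _ ^+ _ in hb *; set u := L%:R * q in h1 h2 *.
move=> h3.
have hv : 9/16 <= v by lra.
have : 0 <= (u - 1/10) * (v - 9/16) by apply: mulr_ge0; lra.
nra.
Qed.

Lemma powbound (a : R) (k : nat) : 0 <= a -> a <= 1 -> k%:R * a <= 1/5 -> (1 + a) ^+ k <= 5/4.
Proof.
move=> a0 a1 ka.
have hb := @bern k a a0 a1.
have hp : (1 + a) ^+ k * (1 - a) ^+ k <= 1.
  rewrite -exprMn; apply: exprn_ile1; nra.
have : 0 <= (1 + a) ^+ k by apply: exprn_ge0; lra.
nra.
Qed.

Lemma Lqbound (r a P Lr : R) (k : nat) : 1/2 <= r -> r <= (1 + a)/2 -> 0 <= a -> a <= 1 ->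
  k%:R * a <= 1/5 -> P = 2 ^+ k -> 4 <= P -> P / 10 <= Lr -> Lr < P/10 + 1 ->
  1/10 <= Lr * r ^+ k /\ Lr * r ^+ k <= 7/16.
Proof.
move=> r1 r2 a0 a1 ka hP P4 L1 L2.
have t1 : 1 <= P * r ^+ k by rewrite hP -exprMn; apply: exprn_ege1; lra.
have t2 : P * r ^+ k <= 5/4.
  apply: (le_trans _ (@powbound a k a0 a1 ka)); rewrite hP -exprMn; apply: lerXn2r;
  rewrite ?nnegrE; lra.
have q0 : 0 <= r ^+ k by apply: exprn_ge0; lra.
split; nra.
Qed.

Lemma ceil_nat (y : R) : 0 <= y -> y <= (`|Num.ceil y|%N)%:R /\ (`|Num.ceil y|%N)%:R < y + 1.
Proof.
move=> y0; have c0 : 0 <= Num.ceil y by rewrite ceil_ge0; lra.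
rewrite natr_absz ger0_norm //; have := ceil_itv y; rewrite intrB /=.
move/andP=> [h1 h2]; split => //; lra.
Qed.
End Real.

Theorem mainTheorem4 (R : realType) (n : nat) (eps : R)
  (x : {ffun 'I_n -> bool}) :
  (0 < n)%N ->
  0 < eps -> eps < 1 ->
  (n%:R / 2%:R : R) <= (hweight x)%:R ->
  (hweight x)%:R <= n%:R / 2%:R + (5%:R / 100%:R) * eps * Num.sqrt (n%:R) ->
  3%:R / 100%:R < @talProbS1 R n eps x.
Proof.
move=> n0 e0 e1 hw1 hw2.
rewrite /talProbS1.
set k := talK n eps. set L := talL R k.
set w := hweight x.
have hGA : (#|G k n x| <= n ^ k)%N.
  by apply: leq_trans (max_card _) _; rewrite card_ffun !card_ord.
have hG : #|G k n x| = (w ^ k)%N by rewrite cardG.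
have hC : #|~: G k n x| = (n ^ k - w ^ k)%N.
  by have := cardsC (G k n x); rewrite card_ffun !card_ord hG => <-; rewrite addKn.
rewrite countS1 hG hC cardsT card_ffun card_ffun !card_ord.
rewrite hG in hGA.
rewrite !natrM !natrX natrB // !natrX.
rewrite -/w in hw1 hw2.
set s := Num.sqrt n%:R in hw2.
have nR : (0 : R) < n%:R by rewrite ltr0n.
have s0 : 0 < s by rewrite sqrtr_gt0.
have ss : s ^+ 2 = n%:R by rewrite sqr_sqrtr // ltW.
have n1 : (1 : R) <= n%:R by rewrite ler1n.
have s1 : 1 <= s by nra.
have se : s / eps * eps = s by rewrite divfK // gt_eqF.
have [k1 k2] : s / eps <= k%:R /\ k%:R < s / eps + 1.
  rewrite /k /talK; apply: ceil_nat; apply: divr_ge0; lra.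
have k2eps : k%:R * eps < s + eps by nra.
have kgt1 : (1 < k)%N by rewrite -(ltr_nat R); nra.
set P : R := 2%:R ^+ k.
have P4 : 4 <= P.
  have -> : (4 : R) = 2%:R ^+ 2 by rewrite expr2; lra.
  by rewrite /P ler_eXn2l // ltr1n.
have [L1 L2] : P / 10 <= L%:R /\ L%:R < P / 10 + 1.
  rewrite /L /talL mulrC; apply: ceil_nat; rewrite mulr_ge0 ?invr_ge0 ?exprn_ge0 ?ler0n //.
set a := eps / (10 * s).
have a10 : a * (10 * s) = eps by rewrite /a divfK // gt_eqF //; nra.
have a0 : 0 <= a by rewrite /a divr_ge0 //; nra.
have a1 : a <= 1 by nra.
have ka : k%:R * a <= 1/5 by nra.
set r : R := w%:R / n%:R.
have rn : r * n%:R = w%:R by rewrite /r divfK // gt_eqF.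
have r1 : 1/2 <= r by nra.
have hE : (1 + a) / 2 * n%:R = n%:R / 2 + 5 / 100 * eps * s.
  by rewrite -ss -a10; field.
have r2 : r <= (1 + a) / 2 by nra.
have [q1 q2] := @Lqbound R r a P L%:R k r1 r2 a0 a1 ka erefl P4 L1 L2.
have L0 : (0 < L)%N by rewrite -(ltr_nat R); nra.
have qa : 0 <= r ^+ k by apply: exprn_ge0; lra.
have qb : r ^+ k <= 1 by apply: exprn_ile1; lra.
have := @final R (r ^+ k) L qa qb q1 q2.
have Nz : (n%:R ^+ k : R) != 0 by rewrite expf_neq0 // gt_eqF.
have NLz : ((n%:R ^+ k) ^+ L.-1 : R) != 0 by rewrite expf_neq0.
have -> : ((n%:R ^+ k) ^+ L : R) = (n%:R ^+ k) * (n%:R ^+ k) ^+ L.-1 by rewrite -exprS prednK.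
rewrite /r expr_div_n.
set N := n%:R ^+ k in Nz NLz *; set g := w%:R ^+ k.
have -> : 1 - g / N = (N - g) / N by field.
rewrite expr_div_n.
set X := (N - g) ^+ L.-1.
have -> : L%:R * (g * X) / (N * N ^+ L.-1) = L%:R * (g / N) * (X / N ^+ L.-1).
  by field; rewrite NLz Nz.
by [].
Qed.
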